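(* Let $\mathsf V$ be a pseudovariety of semigroupoids containing $\mathsf{Sl}$, $A$ a finite-vertex graph, and $B$ a retract subgraph of $A$. Then, identifying $\overline{\Omega}_B\mathsf V$ with its image in $\overline{\Omega}_A\mathsf V$ under the (injective) continuous homomorphism induced by the inclusion $B\to A$, the set $\overline{\Omega}_B\mathsf V$ is open in $\overline{\Omega}_A\mathsf V$.
   Context: A graph has vertices, edges and source/range maps; finite-vertex means finitely many vertices. A pseudovariety of semigroupoids is a class of finite semigroupoids closed under divisors, finite direct products and finite coproducts; $\mathsf{Sl}$ is the pseudovariety of finite semilattices. $\overline{\Omega}_A\mathsf V$ denotes the free pro-$\mathsf V$ semigroupoid over the finite-vertex graph $A$. A subgraph $B$ of $A$ is a retract subgraph if there is an onto graph morphism $r\colon A\to B$ with $r\circ i=\mathrm{id}_B$, where $i\colon B\to A$ is the inclusion; then the induced continuous homomorphism $\overline{\Omega}_B\mathsf V\to\overline{\Omega}_A\mathsf V$ is injective. *)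

(* Defs.v *)
From mathcomp Require Import all_boot.
From mathcomp Require Import boolp classical_sets topology.

Set Implicit Arguments.
Unset Strict Implicit.
Unset Printing Implicit Defensive.

Local Open Scope classical_set_scope.

Record fvgraph := FVGraph {
  gV : finType;
  gE : Type;
  gsrc : gE -> gV;
  gtgt : gE -> gV }.

Definition graph_morph (A B : fvgraph) (f0 : gV A -> gV B) (f1 : gE A -> gE B) :=
  (forall e, gsrc (f1 e) = f0 (gsrc e)) /\ (forall e, gtgt (f1 e) = f0 (gtgt e)).

Definition subgraph_incl (B A : fvgraph) (i0 : gV B -> gV A) (i1 : gE B -> gE A) :=
  graph_morph i0 i1 /\ injective i0 /\ injective i1.

Definition retraction (B A : fvgraph) (i0 : gV B -> gV A) (i1 : gE B -> gE A)
  (r0 : gV A -> gV B) (r1 : gE A -> gE B) :=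
  [/\ graph_morph r0 r1, (forall v, exists u, r0 u = v), (forall e, exists d, r1 d = e),
      (forall v, r0 (i0 v) = v) & (forall e, r1 (i1 e) = e)].

(* Semigroupoids: objects O, arrows X, domain/codomain, and a composition
   [comp x y] (first x, then y), meaningful when [cod x = dom y].        *)
Record sgd_ops (O X : Type) := SgdOps {
  sdom : X -> O;
  scod : X -> O;
  scomp : X -> X -> X }.

Definition is_sgd (O X : Type) (s : sgd_ops O X) :=
  (forall x y, scod s x = sdom s y ->
     sdom s (scomp s x y) = sdom s x /\ scod s (scomp s x y) = scod s y) /\
  (forall x y z, scod s x = sdom s y -> scod s y = sdom s z ->
     scomp s (scomp s x y) z = scomp s x (scomp s y z)).

Definition is_hom (O1 X1 O2 X2 : Type) (s : sgd_ops O1 X1) (t : sgd_ops O2 X2)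
  (h0 : O1 -> O2) (h1 : X1 -> X2) :=
  [/\ (forall x, sdom t (h1 x) = h0 (sdom s x)),
      (forall x, scod t (h1 x) = h0 (scod s x)) &
      (forall x y, scod s x = sdom s y -> h1 (scomp s x y) = scomp t (h1 x) (h1 y))].

Record fsgd := FSgd {
  fO : finType;
  fX : finType;
  fops : sgd_ops fO fX;
  fax : is_sgd fops }.

Definition subsgd (T : fsgd) (PO : fO T -> Prop) (PX : fX T -> Prop) :=
  (forall x, PX x -> PO (sdom (fops T) x) /\ PO (scod (fops T) x)) /\
  (forall x y, PX x -> PX y -> scod (fops T) x = sdom (fops T) y ->
     PX (scomp (fops T) x y)).

(* S divides T: S is a quotient of a subsemigroupoid T' of T, a quotient
   being a morphism that is bijective on objects and surjective on arrows
   (hence on each hom-set). *)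
Definition divides (S T : fsgd) :=
  exists (PO : fO T -> Prop) (PX : fX T -> Prop) (q0 : fO T -> fO S) (q1 : fX T -> fX S),
  subsgd PO PX /\ (forall u v, PO u -> PO v -> q0 u = q0 v -> u = v) /\
  [/\ (forall x, PX x -> sdom (fops S) (q1 x) = q0 (sdom (fops T) x)),
      (forall x, PX x -> scod (fops S) (q1 x) = q0 (scod (fops T) x)),
      (forall x y, PX x -> PX y -> scod (fops T) x = sdom (fops T) y ->
          q1 (scomp (fops T) x y) = scomp (fops S) (q1 x) (q1 y)),
      (forall o, exists2 u, PO u & q0 u = o) &
      (forall s, exists2 x, PX x & q1 x = s)].

Definition is_product (U S T : fsgd) :=
  exists (p0 : fO U -> fO S) (p1 : fX U -> fX S) (q0 : fO U -> fO T) (q1 : fX U -> fX T),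
  [/\ is_hom (fops U) (fops S) p0 p1, is_hom (fops U) (fops T) q0 q1,
      bijective (fun u => (p0 u, q0 u)) & bijective (fun x => (p1 x, q1 x))].

Definition is_coproduct (U S T : fsgd) :=
  exists (a0 : fO S -> fO U) (a1 : fX S -> fX U) (b0 : fO T -> fO U) (b1 : fX T -> fX U),
  [/\ is_hom (fops S) (fops U) a0 a1, is_hom (fops T) (fops U) b0 b1,
      bijective (fun u : fO S + fO T => match u with inl o => a0 o | inr o => b0 o end) &
      bijective (fun u : fX S + fX T => match u with inl x => a1 x | inr x => b1 x end)].

Definition is_trivial_sgd (U : fsgd) := #|fO U| = 1 /\ #|fX U| = 1.
Definition is_empty_sgd (U : fsgd) := #|fO U| = 0.

(* Pseudovariety of semigroupoids: class of finite semigroupoids closed under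
   divisors, finite direct products and finite coproducts (the nullary
   product/coproduct being the trivial/empty semigroupoid). *)
Definition pseudovariety (V : fsgd -> Prop) :=
  [/\ (forall S T, V T -> divides S T -> V S),
      (forall U S T, V S -> V T -> is_product U S T -> V U),
      (forall U, is_trivial_sgd U -> V U),
      (forall U S T, V S -> V T -> is_coproduct U S T -> V U) &
      (forall U, is_empty_sgd U -> V U)].

(* Sl is contained in V: every finite semilattice, viewed as a one-vertex
   semigroupoid, belongs to V. *)
Definition contains_Sl (V : fsgd -> Prop) :=
  forall S : fsgd, #|fO S| = 1 ->
    (forall x y, scomp (fops S) x y = scomp (fops S) y x) ->
    (forall x, scomp (fops S) x x = x) -> V S.

Record tsgd := TSgd {
  tO : topologicalType;
  tX : topologicalType;
  tops : sgd_ops tO tX;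
  tax : is_sgd tops;
  tdom_cont : continuous (sdom tops);
  tcod_cont : continuous (scod tops);
  tcomp_cont : {within [set p : tX * tX | scod tops p.1 = sdom tops p.2],
                 continuous (fun p : tX * tX => scomp tops p.1 p.2)} }.

Definition cont_hom (S T : tsgd) (h0 : tO S -> tO T) (h1 : tX S -> tX T) :=
  [/\ is_hom (tops S) (tops T) h0 h1, continuous h0 & continuous h1].

(* continuous homomorphism into a finite (discrete) semigroupoid *)
Definition cont_hom_fin (S : tsgd) (T : fsgd) (h0 : tO S -> fO T) (h1 : tX S -> fX T) :=
  [/\ is_hom (tops S) (fops T) h0 h1,
      (forall o, open (h0 @^-1` [set o])) &
      (forall x, open (h1 @^-1` [set x]))].

Definition proV (V : fsgd -> Prop) (S : tsgd) :=
  [/\ compact [set: tO S], compact [set: tX S],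
      hausdorff_space (tO S) /\ hausdorff_space (tX S),
      (forall u v : tO S, u <> v -> exists T : fsgd, V T /\
         exists h0 h1, cont_hom_fin (T := T) h0 h1 /\ h0 u <> h0 v) &
      (forall x y : tX S, x <> y -> exists T : fsgd, V T /\
         exists h0 h1, cont_hom_fin (T := T) h0 h1 /\ h1 x <> h1 y)].

Definition graph_to_sgd (A : fvgraph) (S : tsgd) (g0 : gV A -> tO S) (g1 : gE A -> tX S) :=
  (forall e, sdom (tops S) (g1 e) = g0 (gsrc e)) /\
  (forall e, scod (tops S) (g1 e) = g0 (gtgt e)).

Definition free_proV (V : fsgd -> Prop) (A : fvgraph) (F : tsgd)
  (iota0 : gV A -> tO F) (iota1 : gE A -> tX F) :=
  [/\ proV V F, graph_to_sgd iota0 iota1 &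
      forall (S : tsgd) (g0 : gV A -> tO S) (g1 : gE A -> tX S),
        proV V S -> graph_to_sgd g0 g1 ->
        (exists h0 h1, [/\ cont_hom h0 h1,
             (forall v, h0 (iota0 v) = g0 v) & (forall e, h1 (iota1 e) = g1 e)]) /\
        (forall h0 h1 k0 k1, cont_hom h0 h1 -> cont_hom k0 k1 ->
             (forall v, h0 (iota0 v) = g0 v) -> (forall e, h1 (iota1 e) = g1 e) ->
             (forall v, k0 (iota0 v) = g0 v) -> (forall e, k1 (iota1 e) = g1 e) ->
             h0 = k0 /\ h1 = k1)].

(* Main.v *)
Require Import Defs.
From mathcomp Require Import all_boot.
From mathcomp Require Import boolp classical_sets topology.
From mathcomp Require Import functions.
Set Implicit Arguments. Unset Strict Implicit. Unset Printing Implicit Defensive.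
Local Open Scope classical_set_scope.

Lemma within_comp_cont (U V W : topologicalType) (A : set U) (B : set V) (f : U -> V) (g : V -> W) :
  (forall x, A x -> B (f x)) -> continuous f -> {within B, continuous g} -> {within A, continuous (g \o f)}.
Proof.
move=> AB cf /subspace_continuousP cg; apply/subspace_continuousP => x Ax.
move=> P /= HP.
have := cg _ (AB _ Ax) _ HP.
rewrite /= /within /=.
move=> /cf; rewrite nbhs_simpl /=.
apply: filterS => y /= H Ay. exact: H (AB _ Ay).
Qed.

Lemma cont_discrete (X : discreteTopologicalType) (Y : topologicalType) (f : X -> Y) : continuous f.
Proof.
move=> x P HP /=. apply: filterS (discrete_set1 x) => y ->. exact: nbhs_singleton HP.
Qed.

Lemma cont_discrete2 (X Y : discreteTopologicalType) (Z : topologicalType) (f : X * Y -> Z) : continuous f.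
Proof.
move=> [x y] P HP /=. exists ([set x], [set y]) => /=.
  split; exact: discrete_set1.
by move=> [a b] [/= -> ->]; exact: nbhs_singleton.
Qed.

Definition two_ops : sgd_ops (discrete_topology unit) bool :=
  SgdOps (fun _ => tt) (fun _ => tt) orb.
Lemma two_sgd : is_sgd two_ops.
Proof. split; first by []. by move=> x y z _ _; rewrite /= orbA. Qed.

Definition Two : tsgd := @TSgd (discrete_topology unit) bool two_ops two_sgd
  (@cont_discrete _ _ _) (@cont_discrete _ _ _) (continuous_subspaceT (@cont_discrete2 _ _ _ _)).

Definition two_opsF : sgd_ops unit bool := SgdOps (fun _ => tt) (fun _ => tt) orb.
Definition TwoF : fsgd := @FSgd unit bool two_opsF two_sgd.

Lemma proV_Two V : contains_Sl V -> proV V Two.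
Proof.
move=> HSl; split.
- rewrite [X in compact X](_ : _ = [set tt]); first exact: compact_set1.
  by apply/seteqP; split => // -[].
- exact: bool_compact.
- split; exact: discrete_hausdorff.
- by move=> [] [].
- move=> x y xy; exists TwoF; split.
    apply: HSl => //=; [by rewrite card_unit | exact: orbC | exact: orbb].
  exists (fun u : discrete_topology unit => u), (fun b : bool => b); split => //.
  split; [split => //|move=> o; exact: discrete_open|move=> o; exact: discrete_open].
Qed.

Lemma cont_pairmap (X Y X' Y' : topologicalType) (f : X -> X') (g : Y -> Y') :
  continuous f -> continuous g -> continuous (fun p : X * Y => (f p.1, g p.2)).
Proof.
move=> cf cg [x y]; apply: cvg_pair.
- apply: continuous_comp; [exact: cvg_fst | exact: cf].
- apply: continuous_comp; [exact: cvg_snd | exact: cg].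
Qed.

Section SubT.
Variable (S : tsgd) (K : set (tX S)).
Hypothesis Kcl : closed K.
Hypothesis Kcomp : forall x y, K x -> K y -> scod (tops S) x = sdom (tops S) y ->
  K (scomp (tops S) x y).

Local Notation W := (set_type K).

Definition kcomp (a b : W) : W :=
  match pselect (scod (tops S) (val a) = sdom (tops S) (val b)) with
  | left H => SigSub (mem_set (Kcomp (set_valP a) (set_valP b) H))
  | right _ => a
  end.

Lemma kcompE a b : scod (tops S) (val a) = sdom (tops S) (val b) ->
  val (kcomp a b) = scomp (tops S) (val a) (val b).
Proof. by move=> H; rewrite /kcomp; case: pselect. Qed.

Definition sub_ops : sgd_ops (tO S) W :=
  SgdOps (fun a => sdom (tops S) (val a)) (fun a => scod (tops S) (val a)) kcomp.

Lemma sub_sgd : is_sgd sub_ops.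
Proof.
have [ax1 ax2] := tax S.
split => [x y /= H|x y z /= H1 H2]; first by rewrite kcompE //; exact: ax1.
apply: val_inj.
have H3 : scod (tops S) (val (kcomp x y)) = sdom (tops S) (val z).
  by rewrite kcompE // (ax1 _ _ H1).2.
have H4 : scod (tops S) (val x) = sdom (tops S) (val (kcomp y z)).
  by rewrite kcompE // (ax1 _ _ H2).1.
rewrite kcompE // kcompE // kcompE // kcompE //; exact: ax2.
Qed.

Lemma val_cont : continuous (val : W -> tX S).
Proof. exact: initial_continuous. Qed.

Lemma sub_dom_cont : continuous (sdom sub_ops).
Proof. move=> x; apply: continuous_comp; [exact: val_cont | exact: tdom_cont]. Qed.
Lemma sub_cod_cont : continuous (scod sub_ops).
Proof. move=> x; apply: continuous_comp; [exact: val_cont | exact: tcod_cont]. Qed.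

Lemma sub_comp_cont : {within [set p : W * W | scod sub_ops p.1 = sdom sub_ops p.2],
                 continuous (fun p : W * W => scomp sub_ops p.1 p.2)}.
Proof.
apply: (@continuous_comp_initial _ _ _ (@set_val _ K)).
apply: (@subspace_eq_continuous _ _ _
  ((fun p => scomp (tops S) p.1 p.2) \o (fun p : W * W => (val p.1, val p.2)))).
  by move=> p /set_mem /= H; symmetry; exact: (kcompE H).
apply: within_comp_cont; last exact: tcomp_cont.
  by move=> p.
apply: cont_pairmap; exact: val_cont.
Qed.

Lemma sub_compact : compact [set: tX S] -> compact [set: W].
Proof.
move=> cS.
have cK : compact K by apply: (subclosed_compact Kcl cS).
move=> F PF _.
have GK : (set_val @ F) K by rewrite /= /fmap /=; apply: filterS filterT => w _; exact: set_valP.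
have [x [Kx clx]] := cK _ (fmap_proper_filter _ PF) GK.
exists (SigSub (mem_set Kx)); split => //.
move=> A B FA; rewrite nbhsE => -[O' [[O oO Oe] Ow O'B]].
have FA' : (set_val @ F) (set_val @` A).
  by rewrite /= /fmap /=; apply: filterS FA => a Aa; exists a.
have nO : nbhs x O.
  apply: open_nbhs_nbhs; split => //. by rewrite -Oe in Ow.
have [z [[a Aa <-] Oa]] := clx _ _ FA' nO.
exists a; split => //; apply: O'B; rewrite -Oe; exact: Oa.
Qed.

Lemma sub_hausdorff : hausdorff_space (tX S) -> hausdorff_space W.
Proof.
move=> hS p q cpq; apply: val_inj; apply: hS => A B nA nB.
have := cpq _ _ (val_cont nA) (val_cont nB).
by case=> z [Az Bz]; exists (val z).
Qed.

Definition SubT : tsgd := @TSgd (tO S) W sub_ops sub_sgd sub_dom_cont sub_cod_cont sub_comp_cont.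

Lemma chf_sub (T : fsgd) h0 h1 : @cont_hom_fin S T h0 h1 -> @cont_hom_fin SubT T h0 (h1 \o val).
Proof.
case=> [[d c m] o0 o1]; split => //.
  split => [x|x|x y H] /=; [exact: d|exact: c| rewrite kcompE //; exact: m].
move=> x; exact: ((continuousP _).1 val_cont _ (o1 x)).
Qed.

Lemma proV_sub V : proV V S -> proV V SubT.
Proof.
case=> cO cX [hO hX] rO rX; split => //.
- exact: sub_compact.
- split => //; exact: sub_hausdorff.
- move=> u v uv; have [T [VT [h0 [h1 [ch sep]]]]] := rO u v uv.
  exists T; split => //; exists h0, (h1 \o val); split => //; exact: chf_sub.
- move=> x y xy.
  have vxy : val x <> val y by move=> /val_inj.
  have [T [VT [h0 [h1 [ch sep]]]]] := rX _ _ vxy.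
  exists T; split => //; exists h0, (h1 \o val); split => //; exact: chf_sub.
Qed.

Lemma cont_hom_val : @cont_hom SubT S id val.
Proof.
split; [split => [x|x|x y H] //=; exact: kcompE | by move=> x; exact: cvg_id | exact: val_cont].
Qed.
End SubT.

Lemma cont_hom_comp (S T U : tsgd) f0 f1 g0 g1 :
  @cont_hom S T f0 f1 -> @cont_hom T U g0 g1 -> @cont_hom S U (g0 \o f0) (g1 \o f1).
Proof.
case=> [[fd fc fm] cf0 cf1] [[gd gc gm] cg0 cg1]; split.
- split => [x|x|x y H] /=; [by rewrite gd fd|by rewrite gc fc|].
  by rewrite fm // gm // fc fd H.
- move=> x; apply: continuous_comp; [exact: cf0|exact: cg0].
- move=> x; apply: continuous_comp; [exact: cf1|exact: cg1].
Qed.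

Lemma cont_hom_id (S : tsgd) : @cont_hom S S id id.
Proof. split => //; by move=> x; exact: cvg_id. Qed.

Lemma free_dense V (A : fvgraph) (F : tsgd) iota0 iota1 (HF : @free_proV V A F iota0 iota1)
  (K : set (tX F)) (Kcl : closed K)
  (Kcomp : forall x y, K x -> K y -> scod (tops F) x = sdom (tops F) y -> K (scomp (tops F) x y))
  (Kgen : forall e, K (iota1 e)) : forall x, K x.
Proof.
case: (HF) => pF gF univ.
have pK := proV_sub Kcl Kcomp pF.
have gK : graph_to_sgd (S := SubT Kcomp) iota0 (fun e => SigSub (mem_set (Kgen e))).
  by split => e /=; apply gF.
have [[k0 [k1 [ck k0e k1e]]] _] := univ _ _ _ pK gK.
have ch2 := cont_hom_comp ck (cont_hom_val Kcomp).
have [_ uniq] := univ _ iota0 iota1 pF gF.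
have [_ E] := uniq _ _ _ _ (cont_hom_id F) ch2 (fun v => erefl) (fun e => erefl) k0e
   (fun e => congr1 val (k1e e)).
move=> x; rewrite (_ : x = val (k1 x)); first exact: set_valP.
exact: (congr1 (fun f => f x) E).
Qed.

Lemma closed_fix (T : topologicalType) (g : T -> T) : hausdorff_space T -> continuous g ->
  closed [set x | x = g x].
Proof.
move=> hT cg p clp; apply: hT => A B nA nB.
have nAB : nbhs p (A `&` g @^-1` B) by apply: filterI => //; exact: cg.
have [x [/= xe [Ax Bx]]] := clp _ nAB.
by exists x; split => //; rewrite xe.
Qed.

Theorem mainTheorem7
  (V : fsgd -> Prop) (HV : pseudovariety V) (HSl : contains_Sl V)
  (A B : fvgraph) (i0 : gV B -> gV A) (i1 : gE B -> gE A)
  (HBA : subgraph_incl i0 i1)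
  (r0 : gV A -> gV B) (r1 : gE A -> gE B) (Hret : retraction i0 i1 r0 r1)
  (FA : tsgd) (iA0 : gV A -> tO FA) (iA1 : gE A -> tX FA) (HFA : free_proV V iA0 iA1)
  (FB : tsgd) (iB0 : gV B -> tO FB) (iB1 : gE B -> tX FB) (HFB : free_proV V iB0 iB1)
  (h0 : tO FB -> tO FA) (h1 : tX FB -> tX FA) (Hh : cont_hom h0 h1)
  (Hh0 : forall v, h0 (iB0 v) = iA0 (i0 v)) (Hh1 : forall e, h1 (iB1 e) = iA1 (i1 e)) :
  open (range h1).
Proof.
have HFA' := HFA; have HFB' := HFB.
case: HFA' => pA gA univA; case: HFB' => pB gB univB.
case: Hret => [[rs rt] _ _ ri0 ri1].
have gR : graph_to_sgd (S := FB) (iB0 \o r0) (iB1 \o r1).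
  by split => e /=; [rewrite (proj1 gB) rs | rewrite (proj2 gB) rt].
have [[p0 [p1 [cp p0e p1e]]] _] := univA _ _ _ pB gR.
pose g1 := fun e : gE A => `[< ~ exists e', i1 e' = e >].
have gC : graph_to_sgd (S := Two) (fun _ : gV A => (tt : discrete_topology unit)) g1.
  by split.
have pT := proV_Two HSl.
have [[c0 [c1 [cc c0e c1e]]] _] := univA _ _ _ pT gC.
have ch := cont_hom_comp Hh cc.
have cst : @cont_hom FB Two (fun _ => tt) (fun _ => false).
  split; last by move=> x; exact: cvg_cst.
    by split => // x; case: (sdom _ _).
  by move=> x; exact: cvg_cst.
have gF : graph_to_sgd (S := Two) (fun _ : gV B => (tt : discrete_topology unit)) (fun _ => false).
  by split.
have [_ uniqB] := univB _ _ _ pT gF.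
have ge : forall e, (c1 \o h1) (iB1 e) = false.
  move=> e; rewrite /= Hh1 c1e /g1; apply: asboolF => H; apply: H; by exists e.
have [_ E] := uniqB _ _ _ _ ch cst (fun v => match (c0 \o h0) (iB0 v) with tt => erefl end)
  ge (fun v => erefl) (fun e => erefl).
have ch1 : forall y, c1 (h1 y) = false by move=> y; exact: (congr1 (fun f => f y) E).
pose K := [set x | c1 x = true \/ x = h1 (p1 x)].
have cc1 : continuous c1 by case: cc.
have cp1 : continuous p1 by case: cp.
have ch1c : continuous h1 by case: Hh.
have Kcl : closed K.
  apply: closedU.
    exact: ((continuous_closedP _).1 cc1 _ (discrete_closed [set true])).
  apply: closed_fix; first by case: pA => _ _ [].
  by move=> x; apply: continuous_comp; [exact: cp1|exact: ch1c].
have Kcomp : forall x y, K x -> K y -> scod (tops FA) x = sdom (tops FA) y ->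
    K (scomp (tops FA) x y).
  move=> x y Kx Ky H.
  case: cc => [[_ _ cm] _ _].
  have cxy : c1 (scomp (tops FA) x y) = c1 x || c1 y by rewrite cm.
  case: Kx => [Cx|Ex]; first by left; rewrite cxy Cx.
  case: Ky => [Cy|Ey]; first by left; rewrite cxy Cy orbT.
  right.
  case: cp => [[pd pc pm] _ _]; case: Hh => [[hd hc hm] _ _].
  have H' : scod (tops FB) (p1 x) = sdom (tops FB) (p1 y) by rewrite pc pd H.
  by rewrite pm // hm // -Ex -Ey.
have Kgen : forall e, K (iA1 e).
  move=> e; case: (pselect (exists e', i1 e' = e)) => [[e' <-]|ne].
    by right; rewrite p1e /= ri1 Hh1.
  by left; rewrite c1e /g1; apply/asboolP.
have Kall := free_dense HFA Kcl Kcomp Kgen.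
rewrite (_ : range h1 = c1 @^-1` [set false]).
  exact: ((continuousP _).1 cc1 _ (discrete_open [set false])).
apply/seteqP; split => x /=.
  by case=> y _ <-; exact: ch1.
move=> cx; case: (Kall x) => [|->]; first by rewrite cx.
by exists (p1 x).
Qed.
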